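(* For every real $\theta\geq 0$, $K_0(A(\mathbb{R}^2_\theta))=K_0(\mathbb{C})\cong\mathbb{Z}$.
   Context: $A(\mathbb{R}^2_\theta)$ is the unital $*$-algebra generated by two self-adjoint elements $x,y$ with $[x,y]=xy-yx=-i\theta$, elements being finite sums $\sum a_{p,q}x^py^q$ with linearly independent ordered monomials. A projector over a $*$-algebra $A$ is a square matrix $p$ over $A$ with $p^2=p=p^*$; projectors $p,q$ are equivalent if $\mathrm{diag}(p,0)=u\,\mathrm{diag}(q,0)\,u^*$ for some unitary matrix $u$ over $A$ of suitable size; $K_0(A)$ is the Grothendieck group of the semigroup of equivalence classes under $p+q:=\mathrm{diag}(p,q)$. *)

(* Defs.v *)
From HB Require Import structures.
From mathcomp Require Import all_boot all_order all_algebra.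
From mathcomp Require Import complex.
From mathcomp Require Import reals.
Set Implicit Arguments. Unset Strict Implicit. Unset Printing Implicit Defensive.
Import Order.TTheory GRing.Theory Num.Theory.
Local Open Scope ring_scope.

Section Moyal.
Variable R : realType.
Variable theta : R.

Definition CC := R[i].

(** Carrier of A(R^2_theta): an element sum_{p,q} a_{p,q} x^p y^q (ordered
    monomials, x to the left of y) is stored as the bivariate polynomial
    sum_q (sum_p a_{p,q} X^p) Y^q.  ONLY the additive structure (and the zero)
    of {poly {poly CC}} is used; the product of A(R^2_theta) is [wmul] below,
    NOT the commutative polynomial product. *)
Definition Atheta := {poly {poly CC}}.

Definition acoef (a : Atheta) (p q : nat) : CC := (a`_q)`_p.

Definition amono (c : CC) (p q : nat) : Atheta := (c *: 'X^p)%:P * 'X^q.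

(** i*theta, so that y x = x y + i theta  (i.e. [x,y] = -i theta) *)
Definition itheta : CC := Complex 0 theta.

(** (x^p y^q)(x^r y^s) = sum_k k! C(q,k) C(r,k) (i theta)^k x^(p+r-k) y^(q+s-k),
    the normal ordering of y^q x^r using y x = x y + i theta. *)
Definition monoprod (p q r s : nat) : Atheta :=
  \sum_(k < (minn q r).+1)
     amono ((k`! * 'C(q, k) * 'C(r, k))%:R * itheta ^+ k) (p + r - k) (q + s - k).

Definition wmul (a b : Atheta) : Atheta :=
  \sum_(q < size a) \sum_(p < size a`_q) \sum_(s < size b) \sum_(r < size b`_s)
     (acoef a p q * acoef b r s)%:P%:P * monoprod p q r s.

Definition wstar (a : Atheta) : Atheta :=
  \sum_(q < size a) \sum_(p < size a`_q)
     wmul (amono (conjc (acoef a p q)) 0 q) (amono 1 p 0).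

Definition mmul m n k (A : 'M[Atheta]_(m, n)) (B : 'M[Atheta]_(n, k))
  : 'M[Atheta]_(m, k) :=
  \matrix_(i, j) \sum_(l < n) wmul (A i l) (B l j).

Definition mstar m n (A : 'M[Atheta]_(m, n)) : 'M[Atheta]_(n, m) :=
  \matrix_(i, j) wstar (A j i).

Definition mid n : 'M[Atheta]_n := \matrix_(i, j) (if i == j then amono 1 0 0 else 0).

Definition projector n (P : 'M[Atheta]_n) : Prop :=
  mmul P P = P /\ mstar P = P.

Definition unitary n (U : 'M[Atheta]_n) : Prop :=
  mmul U (mstar U) = mid n /\ mmul (mstar U) U = mid n.

Definition pad N m (P : 'M[Atheta]_m) : 'M[Atheta]_N :=
  \matrix_(i, j)
    match (insub (val i) : option 'I_m), (insub (val j) : option 'I_m) with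
    | Some i', Some j' => P i' j'
    | _, _ => 0
    end.

Definition sqmx := {m : nat & 'M[Atheta]_m}.

Definition is_proj (P : sqmx) : Prop := projector (projT2 P).

Definition proj_equiv (P Q : sqmx) : Prop :=
  exists N (U : 'M[Atheta]_N),
    (projT1 P <= N)%N /\ (projT1 Q <= N)%N /\ unitary U /\
    pad N (projT2 P) = mmul (mmul U (pad N (projT2 Q))) (mstar U).

Definition dsum (P Q : sqmx) : sqmx :=
  existT _ (projT1 P + projT1 Q)%N (block_mx (projT2 P) 0 0 (projT2 Q)).

(** Grothendieck group: the pair (P, Q) stands for [P] - [Q];
    (P1,Q1) and (P2,Q2) define the same element of K_0 iff
    [P1] + [Q2] + [R] = [P2] + [Q1] + [R] in the semigroup of classes
    for some projector R. *)
Definition K0_eq (PQ1 PQ2 : sqmx * sqmx) : Prop :=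
  exists Rp : sqmx, is_proj Rp /\
    proj_equiv (dsum (dsum PQ1.1 PQ2.2) Rp) (dsum (dsum PQ2.1 PQ1.2) Rp).

(** the class n [1] in K_0, n an integer, 1 the 1x1 unit projector:
    image of n under Z = K_0(C) -> K_0(A(R^2_theta)) induced by C -> A. *)
Definition sq_id (n : nat) : sqmx := existT _ n (mid n).
Definition sq_empty : sqmx := existT _ 0%N (0 : 'M[Atheta]_0).

Definition int_class (z : int) : sqmx * sqmx :=
  match z with
  | Posz n => (sq_id n, sq_empty)
  | Negz n => (sq_empty, sq_id n.+1)
  end.

End Moyal.

(* Main.v *)
Require Import Defs.
From HB Require Import structures.
From mathcomp Require Import all_boot all_order all_algebra.
From mathcomp Require Import complex reals.
From mathcomp Require Import zify.
Import Order.TTheory GRing.Theory Num.Theory.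
Local Open Scope ring_scope.

Module Aux.
Set Implicit Arguments. Unset Strict Implicit. Unset Printing Implicit Defensive.

Section Coef.
Variable R : realType.
Variable theta : R.
Local Notation A := (Atheta R).
Local Notation C := (R[i]).

Definition emb (c : C) : A := c%:P%:P.

Lemma acoefD (a b : A) p q : acoef (a + b) p q = acoef a p q + acoef b p q.
Proof. by rewrite /acoef !coefD. Qed.

Lemma acoef0 p q : acoef (0 : A) p q = 0.
Proof. by rewrite /acoef !coef0. Qed.

Lemma acoef_sum (I : Type) (r : seq I) (P : pred I) (F : I -> A) p q :
  acoef (\sum_(i <- r | P i) F i) p q = \sum_(i <- r | P i) acoef (F i) p q.
Proof. by rewrite /acoef !coef_sum. Qed.

Lemma acoefCM (c : C) (a : A) p q : acoef (c%:P%:P * a) p q = c * acoef a p q.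
Proof. by rewrite /acoef !coefCM. Qed.

Lemma acoef_amono (c : C) p q u v :
  acoef (amono c p q) u v = c * (u == p)%:R * (v == q)%:R.
Proof.
rewrite /acoef /amono coefCM coefXn.
case: (v == q); rewrite ?mulr1 ?mulr0 ?coef0 // coefZ coefXn.
by case: (u == p); rewrite ?mulr1 ?mulr0.
Qed.

Lemma acoef_eq (a b : A) : (forall p q, acoef a p q = acoef b p q) -> a = b.
Proof. by move=> H; apply/polyP => q; apply/polyP => p; apply: H. Qed.

Lemma acoef_emb (c : C) p q : acoef (emb c) p q = c * (p == 0)%:R * (q == 0)%:R.
Proof.
rewrite /acoef /emb coefC; case: (q == 0); rewrite ?mulr1 ?mulr0 ?coef0 //.
by rewrite coefC; case: (p == 0); rewrite ?mulr1 ?mulr0.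
Qed.

Lemma sum_widen (V : nmodType) n N (F : nat -> V) : (n <= N)%N ->
  (forall i, (n <= i)%N -> (i < N)%N -> F i = 0) ->
  \sum_(i < n) F i = \sum_(i < N) F i.
Proof.
move=> nN H.
rewrite (big_ord_widen _ _ nN) [RHS](bigID (fun i : 'I_N => (i < n)%N)) /=.
rewrite [X in _ = _ + X]big1 ?addr0 // => i; rewrite -leqNgt => h.
exact: H.
Qed.

Lemma sum_single (V : nmodType) N (i0 : 'I_N) (F : 'I_N -> V) :
  (forall i, i != i0 -> F i = 0) -> \sum_i F i = F i0.
Proof. by move=> H; rewrite (bigD1 i0) //= big1 ?addr0 // => i /H. Qed.

Lemma sum_nz (V : nmodType) N (F : 'I_N -> V) :
  \sum_i F i != 0 -> exists i, F i != 0.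
Proof.
move=> h; apply/existsP; apply: contraNT h => /existsPn H.
by apply/eqP/big1 => i _; apply/eqP; move: (H i); rewrite negbK.
Qed.

Definition bndle (a : A) N := (size a <= N)%N /\ forall q, (size (a`_q)%R <= N)%N.

Definition bnd (a : A) : nat := size a + \max_(q < size a) size (a`_q)%R.

Lemma bndleP a : bndle a (bnd a).
Proof.
split; first exact: leq_addr.
move=> q; case: (ltnP q (size a)) => h.
  apply: leq_trans (leq_addl _ _).
  exact: (leq_bigmax_cond (F := fun q : 'I_(size a) => size a`_q) (Ordinal h)).
by rewrite nth_default // size_poly0.
Qed.

Lemma bndle_mon a N M : bndle a N -> (N <= M)%N -> bndle a M.
Proof. by case=> h1 h2 h; split => [|q]; apply: leq_trans h; [exact h1| exact: h2]. Qed.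

Lemma acoef_out a N p q : bndle a N -> (N <= p)%N || (N <= q)%N -> acoef a p q = 0.
Proof.
case=> h1 h2 /orP[]h; rewrite /acoef.
  by rewrite nth_default //; apply: leq_trans h.
by rewrite (nth_default _ (leq_trans h1 h)) coef0.
Qed.

Lemma sum2_widen (V : nmodType) (a : A) N (X : nat -> nat -> V) : bndle a N ->
  (forall p q, acoef a p q = 0 -> X p q = 0) ->
  \sum_(q < size a) \sum_(p < size a`_q) X p q = \sum_(q < N) \sum_(p < N) X p q.
Proof.
case=> Hs Hq HX.
transitivity (\sum_(q < size a) \sum_(p < N) X p q).
  apply: eq_bigr => q _; apply: (sum_widen (F := fun p => X p q)) => // p h1 h2.
  by apply: HX; rewrite /acoef nth_default.
apply: (sum_widen (F := fun q => \sum_(p < N) X p q)) => // q h1 h2.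
by apply: big1 => p _; apply: HX; rewrite /acoef (nth_default _ h1) coef0.
Qed.

Lemma wmulN (a b : A) N : bndle a N -> bndle b N ->
  wmul theta a b = \sum_(q < N) \sum_(p < N) \sum_(s < N) \sum_(r < N)
     (acoef a p q * acoef b r s)%:P%:P * monoprod theta p q r s.
Proof.
move=> ha hb; rewrite /wmul.
rewrite (@sum2_widen _ a N (fun p q => \sum_(s < size b) \sum_(r < size b`_s)
     (acoef a p q * acoef b r s)%:P%:P * monoprod theta p q r s)) //; last first.
  by move=> p q h; apply: big1 => s _; apply: big1 => r _; rewrite h mul0r !polyC0 mul0r.
apply: eq_bigr => q _; apply: eq_bigr => p _.
apply: (@sum2_widen _ b N (fun r s => (acoef a p q * acoef b r s)%:P%:P * monoprod theta p q r s)) => //.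
by move=> r s h; rewrite h mulr0 !polyC0 mul0r.
Qed.

End Coef.

Section Mono.
Variable R : realType.
Variable theta : R.
Local Notation A := (Atheta R).
Local Notation C := (R[i]).

Definition cw q r k : C := (k`! * 'C(q, k) * 'C(r, k))%:R * itheta theta ^+ k.

Lemma acoef_monoprod p q r s u v : acoef (monoprod theta p q r s) u v =
  \sum_(k < (minn q r).+1) cw q r k * (u == (p + r - k)%N)%:R * (v == (q + s - k)%N)%:R.
Proof. by rewrite /monoprod acoef_sum; apply: eq_bigr => k _; rewrite acoef_amono. Qed.

Lemma acoef_amono' (c : C) p q u v :
  acoef (amono c p q) u v = if (u == p) && (v == q) then c else 0.
Proof.
by rewrite acoef_amono; case: (u == p); case: (v == q); rewrite /= ?mulr1 ?mulr0.
Qed.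

Lemma bndle_amono (c : C) p q : bndle (amono c p q) (p + q).+1.
Proof.
rewrite /amono mul_polyC; split.
  by apply: leq_trans (size_scale_leq _ _) _; rewrite size_polyXn; lia.
move=> q'; rewrite coefZ coefXn; case: (q' == q); rewrite ?mulr1 ?mulr0 ?size_poly0 //.
by apply: leq_trans (size_scale_leq _ _) _; rewrite size_polyXn; lia.
Qed.

Lemma ord_neq N (i : 'I_N) (j : nat) (h : (j < N)%N) :
  i != Ordinal h -> (nat_of_ord i == j) = false.
Proof. by move=> hi; apply/negbTE; apply: contra hi => /eqP e; apply/eqP/val_inj. Qed.

Lemma wmul_amono (c d : C) p q r s :
  wmul theta (amono c p q) (amono d r s) = (c * d)%:P%:P * monoprod theta p q r s.
Proof.
set N := (p + q + r + s).+1.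
rewrite (@wmulN _ _ _ _ N); try by (apply: bndle_mon (bndle_amono _ _ _) _; rewrite /N; lia).
have hq : (q < N)%N by rewrite /N; lia.
have hp : (p < N)%N by rewrite /N; lia.
have hs : (s < N)%N by rewrite /N; lia.
have hr : (r < N)%N by rewrite /N; lia.
rewrite (sum_single (i0 := Ordinal hq)) => [|i /ord_neq hi]; last first.
  apply: big1 => j _; apply: big1 => k _; apply: big1 => l _.
  by rewrite acoef_amono' hi andbF mul0r !polyC0 mul0r.
rewrite (sum_single (i0 := Ordinal hp)) => [|i /ord_neq hi]; last first.
  apply: big1 => k _; apply: big1 => l _.
  by rewrite acoef_amono' hi mul0r !polyC0 mul0r.
rewrite (sum_single (i0 := Ordinal hs)) => [|i /ord_neq hi]; last first.
  apply: big1 => l _.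
  by rewrite [acoef (amono d _ _) _ _]acoef_amono' hi andbF mulr0 !polyC0 mul0r.
rewrite (sum_single (i0 := Ordinal hr)) => [|i /ord_neq hi]; last first.
  by rewrite [acoef (amono d _ _) _ _]acoef_amono' hi mulr0 !polyC0 mul0r.
by rewrite /= !acoef_amono' !eqxx.
Qed.

Lemma wstarN (a : A) N : bndle a N -> wstar theta a =
  \sum_(q < N) \sum_(p < N) (conjc (acoef a p q))%:P%:P * monoprod theta 0 q p 0.
Proof.
move=> ha; rewrite /wstar.
rewrite (@sum2_widen _ _ a N (fun p q => wmul theta (amono (conjc (acoef a p q)) 0 q) (amono 1 p 0))) //.
  by apply: eq_bigr => q _; apply: eq_bigr => p _; rewrite wmul_amono mulr1.
by move=> p q h; rewrite h conjc0 wmul_amono mul0r !polyC0 mul0r.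
Qed.

Lemma amono00 (c : C) : amono c 0 0 = emb c.
Proof. by rewrite /amono /emb !expr0 mulr1 alg_polyC. Qed.

Lemma monoprod0 : monoprod theta 0 0 0 0 = 1.
Proof.
rewrite /monoprod big_ord1 amono00 /emb /= expr0 mulr1 fact0 bin0 !muln1.
by rewrite !polyC1.
Qed.

Lemma wmul_emb (c d : C) : wmul theta (emb c) (emb d) = emb (c * d).
Proof. by rewrite -!amono00 wmul_amono monoprod0 mulr1 amono00. Qed.

Lemma bndle_emb (c : C) : bndle (emb c) 1.
Proof. by rewrite -amono00; apply: bndle_amono. Qed.

Lemma wstar_emb (c : C) : wstar theta (emb c) = emb (conjc c).
Proof.
by rewrite (wstarN (bndle_emb c)) !big_ord1 acoef_emb /= !mulr1 monoprod0 mulr1.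
Qed.

Lemma embD (c d : C) : emb (c + d) = emb c + emb d.
Proof. by rewrite /emb !polyCD. Qed.
Lemma emb0 : emb 0 = 0 :> A.
Proof. by rewrite /emb !polyC0. Qed.
Lemma emb1 : emb 1 = amono 1 0 0 :> A.
Proof. by rewrite amono00. Qed.

Lemma emb_sum (I : Type) (r : seq I) (P : pred I) (F : I -> C) :
  emb (\sum_(i <- r | P i) F i) = \sum_(i <- r | P i) emb (F i).
Proof. by elim/big_rec2: _ => [|i x y _ <-]; by rewrite ?emb0 ?embD. Qed.

Lemma emb_inj : injective (@emb R).
Proof. by move=> c d /polyC_inj /polyC_inj. Qed.

End Mono.

Lemma sum_single_nz (V : zmodType) N (i0 : 'I_N) (F : 'I_N -> V) :
  (forall i, F i != 0 -> nat_of_ord i = nat_of_ord i0) -> \sum_i F i = F i0.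
Proof.
move=> H; apply: sum_single => i hi; apply/eqP; apply: contraNT hi => /H e.
by apply/eqP/val_inj.
Qed.

Lemma sum2_single (V : zmodType) N (i0 j0 : 'I_N) (T : 'I_N -> 'I_N -> V) :
  (forall i j, T i j != 0 -> nat_of_ord i = nat_of_ord i0 /\ nat_of_ord j = nat_of_ord j0) ->
  \sum_i \sum_j T i j = T i0 j0.
Proof.
move=> H; rewrite (sum_single_nz (i0 := i0)).
  by apply: sum_single_nz => j /H [].
by move=> i /sum_nz [j /H []].
Qed.

Lemma sum4_single (V : zmodType) N (i0 j0 k0 l0 : 'I_N) (T : 'I_N -> 'I_N -> 'I_N -> 'I_N -> V) :
  (forall i j k l, T i j k l != 0 -> [/\ nat_of_ord i = nat_of_ord i0, nat_of_ord j = nat_of_ord j0,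
       nat_of_ord k = nat_of_ord k0 & nat_of_ord l = nat_of_ord l0]) ->
  \sum_i \sum_j \sum_k \sum_l T i j k l = T i0 j0 k0 l0.
Proof.
move=> H; rewrite (sum2_single (i0 := i0) (j0 := j0)).
  by apply: sum2_single => k l /H [].
by move=> i j /sum_nz [k /sum_nz [l /H []]].
Qed.

Section Top.
Variable R : realType.
Variable theta : R.
Local Notation A := (Atheta R).
Local Notation C := (R[i]).

Lemma ind_nz (x : C) (b1 b2 : bool) : x * b1%:R * b2%:R != 0 -> b1 && b2.
Proof. by case: b1; case: b2 => //=; rewrite ?mulr0 ?mul0r ?eqxx. Qed.

Lemma mul_nz (x y : C) : x * y != 0 -> x != 0 /\ y != 0.
Proof. by rewrite mulf_eq0 negb_or => /andP. Qed.

Lemma ksum_nz m (c : 'I_m.+1 -> C) (f g : 'I_m.+1 -> nat) u v :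
  \sum_(k < m.+1) c k * (u == f k)%:R * (v == g k)%:R != 0 ->
  exists k : 'I_m.+1, u = f k /\ v = g k.
Proof.
by move=> /sum_nz [k /ind_nz /andP [/eqP e1 /eqP e2]]; exists k.
Qed.

Lemma acoef_wmul (a b : A) N u v : bndle a N -> bndle b N ->
  acoef (wmul theta a b) u v = \sum_(q < N) \sum_(p < N) \sum_(s < N) \sum_(r < N)
    (acoef a p q * acoef b r s * \sum_(k < (minn q r).+1)
       cw theta q r k * (u == (p + r - k)%N)%:R * (v == (q + s - k)%N)%:R).
Proof.
move=> ha hb; rewrite (wmulN theta ha hb) acoef_sum.
apply: eq_bigr => q _; rewrite acoef_sum; apply: eq_bigr => p _.
rewrite acoef_sum; apply: eq_bigr => s _; rewrite acoef_sum; apply: eq_bigr => r _.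
by rewrite acoefCM acoef_monoprod.
Qed.

Lemma acoef_wstar (a : A) N u v : bndle a N ->
  acoef (wstar theta a) u v = \sum_(q < N) \sum_(p < N)
    (conjc (acoef a p q) * \sum_(k < (minn q p).+1)
       cw theta q p k * (u == (p - k)%N)%:R * (v == (q - k)%N)%:R).
Proof.
move=> ha; rewrite (wstarN theta ha) acoef_sum.
apply: eq_bigr => q _; rewrite acoef_sum; apply: eq_bigr => p _.
by rewrite acoefCM acoef_monoprod add0n addn0.
Qed.

Lemma cw0 q r : cw theta q r 0 = 1.
Proof. by rewrite /cw fact0 !bin0 expr0 mulr1. Qed.

Definition topb (a : A) D p0 := forall p q, acoef a p q != 0 ->
  (p + q <= D)%N /\ ((p + q)%N = D -> (p <= p0)%N).

Lemma bnd_big (a : A) D : bndle a (maxn (bnd a) D.+1) /\ (D < maxn (bnd a) D.+1)%N.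
Proof.
split; last by rewrite leq_max leqnn orbT.
by apply: bndle_mon (bndleP a) _; rewrite leq_max leqnn.
Qed.

Lemma wstar_deg (a : A) D p0 : topb a D p0 ->
  (forall u v, (D < u + v)%N -> acoef (wstar theta a) u v = 0) /\
  (forall u v, (u + v)%N = D -> acoef (wstar theta a) u v = conjc (acoef a u v)).
Proof.
move=> ht; have [ha hN] := bnd_big a D; set N := maxn (bnd a) D.+1 in ha hN.
split=> u v huv; rewrite (acoef_wstar _ _ ha).
  apply: big1 => q _; apply: big1 => p _; apply/eqP; apply: contraT => /mul_nz [h1].
  move=> /ksum_nz [k [e1 e2]]; have := ltn_ord k.
  have [] := ht p q; first by apply: contra h1 => /eqP ->; rewrite conjc0.
  by lia.
have hu : (u < N)%N by lia.
have hv : (v < N)%N by lia.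
rewrite (sum2_single (i0 := Ordinal hv) (j0 := Ordinal hu)) /=; last first.
  move=> q p /mul_nz [h1] /ksum_nz [k [e1 e2]]; have := ltn_ord k.
  have [] := ht p q; first by apply: contra h1 => /eqP ->; rewrite conjc0.
  by lia.
rewrite (sum_single_nz (i0 := ord0)) /=.
  by rewrite cw0 !subn0 !eqxx !mulr1.
move=> k /ind_nz /andP [/eqP e1 /eqP e2]; have := ltn_ord k.
have : (u + v <= D)%N by lia.
by lia.
Qed.

Lemma wmul_top (g f : A) D p0 : topb g D p0 -> topb f D p0 -> (p0 <= D)%N ->
  forall u v, u = (p0 + p0)%N -> v = ((D - p0) + (D - p0))%N ->
  acoef (wmul theta g f) u v = acoef g p0 (D - p0) * acoef f p0 (D - p0).
Proof.
move=> hg hf hp u v eu ev.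
have [ha hN] := bnd_big g (maxn (bnd f) D).
have hb : bndle f (maxn (bnd g) (maxn (bnd f) D).+1).
  apply: bndle_mon (bndleP f) _; rewrite leq_max; apply/orP; right.
  by apply: leq_trans (leqnSn _); rewrite leq_max leqnn.
set N := maxn (bnd g) (maxn (bnd f) D).+1 in ha hb hN.
have hD : (D < N)%N by apply: leq_ltn_trans hN; rewrite leq_max leqnn orbT.
rewrite (acoef_wmul _ _ ha hb).
have h1 : (D - p0 < N)%N by lia.
have h2 : (p0 < N)%N by lia.
rewrite (sum4_single (i0 := Ordinal h1) (j0 := Ordinal h2) (k0 := Ordinal h1) (l0 := Ordinal h2)) /=.
  rewrite (sum_single_nz (i0 := ord0)) /=.
    by rewrite cw0 !subn0 eu ev !eqxx !mulr1.
  move=> k /ind_nz /andP [/eqP e1 /eqP e2]; have := ltn_ord k.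
  by lia.
move=> q p s r /mul_nz [] /mul_nz [n1 n2] /ksum_nz [k [e1 e2]]; have := ltn_ord k.
have [g1 g2] := hg p q n1; have [f1 f2] := hf r s n2; move=> hk.
by split; lia.
Qed.

End Top.

Section Const.
Variable R : realType.
Variable theta : R.
Local Notation A := (Atheta R).
Local Notation C := (R[i]).

Lemma wstar_topb (a : A) D p0 : topb a D p0 -> topb (wstar theta a) D p0.
Proof.
move=> ht; have [h1 h2] := wstar_deg theta ht.
move=> p q nz; case: (ltnP D (p + q)) => hpq.
  by move: nz; rewrite h1 ?eqxx.
split=> // e; move: nz; rewrite h2 // conjc_eq0 => /ht [] _; exact.
Qed.

Lemma sos_const n (f : 'I_n -> A) (g : A) :
  \sum_l wmul theta (wstar theta (f l)) (f l) = g ->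
  (forall D, (0 < D)%N -> (forall l p q, acoef (f l) p q != 0 -> (p + q <= D)%N) ->
     forall p q, (p + q)%N = (D + D)%N -> acoef g p q = 0) ->
  forall l p q, (p + q != 0)%N -> acoef (f l) p q = 0.
Proof.
move=> hg hyp l1 p1 q1 hpq; apply/eqP; apply: contraT => nz1.
set B := \max_(l < n) bnd (f l).
have hB : forall l, bndle (f l) B.
  by move=> l; apply: bndle_mon (bndleP _) _; exact: (leq_bigmax (F := fun l => bnd (f l))).
have nzB : forall l p q, acoef (f l) p q != 0 -> (p < B)%N /\ (q < B)%N.
  move=> l p q nz; split; rewrite ltnNge; apply: contra nz => h;
  by rewrite (acoef_out (hB l)) ?h ?orbT.
pose PD := fun d => [exists l : 'I_n, [exists p : 'I_d.+1, acoef (f l) p (d - p) != 0]].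
have PDI : forall l p q, acoef (f l) p q != 0 -> PD (p + q)%N.
  move=> l p q nz; apply/existsP; exists l; apply/existsP.
  have hp : (p < (p + q).+1)%N by lia.
  by exists (Ordinal hp); rewrite /= addKn.
have exD : exists d, PD d by exists (p1 + q1)%N; exact: PDI nz1.
have bdD : forall d, PD d -> (d <= B + B)%N.
  move=> d /existsP [l /existsP [p nz]]; have [h1 h2] := nzB _ _ _ nz.
  have := ltn_ord p; by lia.
case: (ex_maxnP exD bdD) => D /existsP [l2 /existsP [p2 nz2]] maxD.
have degf : forall l p q, acoef (f l) p q != 0 -> (p + q <= D)%N.
  by move=> l p q /PDI /maxD.
have D0 : (0 < D)%N by have := degf _ _ _ nz1; lia.
pose Pp := fun p => [exists l : 'I_n, acoef (f l) p (D - p) != 0] && (p <= D)%N.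
have exP : exists p, Pp p.
  exists p2; apply/andP; split; first by apply/existsP; exists l2.
  by rewrite -ltnS.
have bdP : forall p, Pp p -> (p <= D)%N by move=> p /andP [].
case: (ex_maxnP exP bdP) => p0 /andP [/existsP [l0 nz0] hp0] maxP.
have topf : forall l, topb (f l) D p0.
  move=> l p q nz; split; first exact: degf nz.
  move=> e; apply: maxP; apply/andP; split; last by lia.
  by apply/existsP; exists l; have -> : (D - p = q)%N by lia.
have := hyp D D0 degf (p0 + p0)%N ((D - p0) + (D - p0))%N.
rewrite -hg acoef_sum.
have -> : \sum_l acoef (wmul theta (wstar theta (f l)) (f l)) (p0 + p0) (D - p0 + (D - p0)) =
          \sum_l conjc (acoef (f l) p0 (D - p0)) * acoef (f l) p0 (D - p0).
  apply: eq_bigr => l _.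
  rewrite (wmul_top theta (wstar_topb (topf l)) (topf l) hp0 erefl erefl).
  have [_ h2] := wstar_deg theta (topf l).
  by rewrite h2 //; lia.
move=> /(_ ltac:(lia)) /psumr_eq0P H.
have := H (fun l _ => ltac:(by rewrite mulrC mulcJ_ge0)) l0 isT.
by move/eqP; rewrite mulf_eq0 conjc_eq0 orbb (negbTE nz0).
Qed.

Lemma const_of (a : A) : (forall p q, (p + q != 0)%N -> acoef a p q = 0) ->
  a = emb (acoef a 0 0).
Proof.
move=> h; apply: acoef_eq => p q; rewrite acoef_emb.
by case: p => [|p]; case: q => [|q]; rewrite /= ?mulr1 ?mulr0 // h.
Qed.

Lemma proj_const m (P : 'M[A]_m) : projector theta P ->
  forall i j, P i j = emb (acoef (P i j) 0 0).
Proof.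
case=> hmul hstar i j; apply: const_of => p q hpq.
apply: (@sos_const _ (fun l => P l j) (P j j)) hpq.
  have : mmul theta (mstar theta P) P j j = P j j by rewrite hstar hmul.
  by rewrite /mmul mxE => <-; apply: eq_bigr => l _; rewrite /mstar mxE.
move=> D hD hdeg p' q' e; apply/eqP; apply: contraT => nz.
by have := hdeg j p' q' nz; lia.
Qed.

Lemma unitary_const m (U : 'M[A]_m) : unitary theta U ->
  forall i j, U i j = emb (acoef (U i j) 0 0).
Proof.
case=> _ hu i j; apply: const_of => p q hpq.
apply: (@sos_const _ (fun l => U l j) (amono 1 0 0)) hpq.
  have : mmul theta (mstar theta U) U j j = amono 1 0 0 by rewrite hu /mid mxE eqxx.
  by rewrite /mmul mxE => <-; apply: eq_bigr => l _; rewrite /mstar mxE.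
move=> D hD hdeg p' q' e; rewrite acoef_amono'.
by case: eqP => [e1|]; case: eqP => [e2|] //=; lia.
Qed.

End Const.

Section Lin.
Variable R : realType.
Local Notation C := (R[i]).

Definition adj m n (M : 'M[C]_(m, n)) : 'M[C]_(n, m) := \matrix_(i, j) conjc (M j i).

Lemma adjM m n p (X : 'M[C]_(m, n)) (Y : 'M[C]_(n, p)) : adj (X *m Y) = adj Y *m adj X.
Proof.
apply/matrixP => i j; rewrite !mxE rmorph_sum; apply: eq_bigr => l _.
by rewrite !mxE rmorphM mulrC.
Qed.

Lemma adjK m n (X : 'M[C]_(m, n)) : adj (adj X) = X.
Proof. by apply/matrixP => i j; rewrite !mxE conjcK. Qed.

Lemma adjD m n (X Y : 'M[C]_(m, n)) : adj (X + Y) = adj X + adj Y.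
Proof. by apply/matrixP => i j; rewrite !mxE rmorphD. Qed.

Lemma adjB m n (X Y : 'M[C]_(m, n)) : adj (X - Y) = adj X - adj Y.
Proof. by apply/matrixP => i j; rewrite !mxE rmorphB. Qed.

Lemma adj0 m n : adj (0 : 'M[C]_(m, n)) = 0.
Proof. by apply/matrixP => i j; rewrite !mxE conjc0. Qed.

Lemma adj1 n : adj (1%:M : 'M[C]_n) = 1%:M.
Proof. by apply/matrixP => i j; rewrite !mxE conjc_nat eq_sym. Qed.

Lemma adjZ m n a (X : 'M[C]_(m, n)) : adj (a *: X) = conjc a *: adj X.
Proof. by apply/matrixP => i j; rewrite !mxE rmorphM. Qed.

Lemma adj_block m1 m2 n1 n2 (Aul : 'M[C]_(m1, n1)) (Aur : 'M[C]_(m1, n2))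
  (Adl : 'M[C]_(m2, n1)) (Adr : 'M[C]_(m2, n2)) :
  adj (block_mx Aul Aur Adl Adr) = block_mx (adj Aul) (adj Adl) (adj Aur) (adj Adr).
Proof.
apply/matrixP => i j; rewrite mxE.
case: (split_ordP i) => i' ->; case: (split_ordP j) => j' ->;
by rewrite ?block_mxEul ?block_mxEur ?block_mxEdl ?block_mxEdr mxE.
Qed.

Lemma adj_row m n1 n2 (A1 : 'M[C]_(m, n1)) (A2 : 'M[C]_(m, n2)) :
  adj (row_mx A1 A2) = col_mx (adj A1) (adj A2).
Proof.
apply/matrixP => i j; rewrite mxE.
by case: (split_ordP i) => i' ->; rewrite ?col_mxEu ?col_mxEd ?row_mxEl ?row_mxEr mxE.
Qed.

Lemma sqrt_step n (v : 'cV[C]_n) : v != 0 ->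
  exists c : C, conjc c = c /\ c * c * (adj v *m v) 0 0 = 1.
Proof.
move=> nz.
set s := (adj v *m v) 0 0.
have hs : s = \sum_i v i 0 * conjc (v i 0).
  by rewrite /s mxE; apply: eq_bigr => i _; rewrite mxE mulrC.
have s0 : 0 <= s by rewrite hs; apply: sumr_ge0 => i _; exact: mulcJ_ge0.
have sn0 : s != 0.
  apply: contra nz => /eqP; rewrite hs => /psumr_eq0P H.
  apply/eqP/matrixP => i j; rewrite (ord1 j) mxE.
  have := H (fun i _ => mulcJ_ge0 (v i 0)) i isT.
  by move/eqP; rewrite mulf_eq0 conjc_eq0 orbb => /eqP.
have key : forall z : C, 0 <= z -> z = ((complex.Re z)%:C)%C.
  by case=> a b; rewrite lecE /= => /andP [/eqP -> _].
have sR : s = ((complex.Re s)%:C)%C by exact: key.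
have sR0 : 0 < complex.Re s.
  move: s0 sn0; rewrite {1 2}sR lecR eq_complex /= eqxx andbT => h1 h2.
  by rewrite lt_def h2 h1.
set t := Num.sqrt (complex.Re s).
have t0 : 0 < t by rewrite sqrtr_gt0.
exists ((t%:C)%C)^-1; split; first by rewrite conjc_inv conjc_real.
rewrite sR -invfM -rmorphM /= -expr2 sqr_sqrtr ?ltW // mulVf //.
by rewrite eq_complex /= eqxx andbT gt_eqF.
Qed.

End Lin.

Section GS.
Variable R : realType.
Local Notation C := (R[i]).

Lemma GS m (P : 'M[C]_m) : P *m P = P -> adj P = P ->
  exists r (V : 'M[C]_(m, r)), adj V *m V = 1%:M /\ V *m adj V = P.
Proof.
move: {2}(\rank P) (leqnn (\rank P)) => k; elim: k P => [|k IH] P hk hPP hPs;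
  case: (eqVneq P 0) => [->|nz];
  try by (exists 0%N, 0; split; [apply/matrixP => -[] | rewrite mul0mx]).
  by move: hk; rewrite leqn0 mxrank_eq0 (negbTE nz).
have [j hj] : exists j, col j P != 0.
  case: (pickP (fun j => col j P != 0)) => [j hj|h]; first by exists j.
  have P0 : P = 0.
    apply/matrixP => a b; have := h b; move/negbFE/eqP/matrixP/(_ a 0).
    by rewrite !mxE.
  by move: nz; rewrite P0 eqxx.
set v := col j P.
have [c [cc hc]] := sqrt_step hj.
set w := c *: v.
have ww : adj w *m w = 1%:M.
  rewrite /w adjZ cc -scalemxAl -scalemxAr scalerA [adj v *m v]mx11_scalar.
  by rewrite scale_scalar_mx hc.
have Pv : P *m v = v.
  apply/matrixP => a b; rewrite /v !mxE.
  by rewrite -[in RHS]hPP mxE; apply: eq_bigr => l _; rewrite !mxE.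
have Pw : P *m w = w by rewrite /w -scalemxAr Pv.
have wP : adj w *m P = adj w by rewrite -{1}hPs -adjM Pw.
set P' := P - w *m adj w.
have P'w : P' *m w = 0 by rewrite /P' mulmxBl Pw -mulmxA ww mulmx1 subrr.
have P'P : P' *m P = P' by rewrite /P' mulmxBl hPP -mulmxA wP.
have hP'P' : P' *m P' = P'.
  rewrite {1}/P' mulmxBr P'P mulmxA P'w mul0mx subr0 //.
have hP's : adj P' = P' by rewrite /P' adjB adjM adjK hPs.
have hr : (\rank P' < \rank P)%N.
  apply: rank_ltmx; rewrite ltmxE; apply/andP; split.
    by rewrite -P'P submxMl.
  apply/negP => hsub.
  have : (adj w <= P')%MS by apply: submx_trans hsub; rewrite -wP submxMl.
  case/submxP => D hD.
  have : adj w *m w = 0 by rewrite hD -mulmxA P'w mulmx0.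
  rewrite ww => /matrixP /(_ 0 0); rewrite !mxE /=.
  by move/eqP; rewrite oner_eq0.
have [r [V' [hV1 hV2]]] := IH P' ltac:(by rewrite -ltnS; apply: leq_trans hk) hP'P' hP's.
have hV'P : adj V' *m P' = adj V' by rewrite -hV2 mulmxA hV1 mul1mx.
have hV'w : adj V' *m w = 0 by rewrite -hV'P -mulmxA P'w mulmx0.
have hwV' : adj w *m V' = 0 by rewrite -[V']adjK -adjM hV'w adj0.
exists (r + 1)%N, (row_mx V' w); split.
  rewrite adj_row mul_col_row hV1 hV'w hwV' ww.
  by rewrite -scalar_mx_block.
by rewrite adj_row mul_row_col hV2 /P' subrK.
Qed.

Lemma tr_GS m r (P : 'M[C]_m) (V : 'M[C]_(m, r)) :
  adj V *m V = 1%:M -> V *m adj V = P -> \tr P = r%:R.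
Proof. by move=> h1 <-; rewrite mxtrace_mulC h1 mxtrace1. Qed.

End GS.

Section Pad.
Variable R : realType.
Local Notation C := (R[i]).

Definition padM M1 N1 m n (X : 'M[C]_(m, n)) : 'M[C]_(M1, N1) :=
  \matrix_(i, j)
    match (insub (val i) : option 'I_m), (insub (val j) : option 'I_n) with
    | Some i', Some j' => X i' j'
    | _, _ => 0
    end.

Lemma padM_id m n (X : 'M[C]_(m, n)) : padM m n X = X.
Proof. by apply/matrixP => i j; rewrite mxE !valK. Qed.

Lemma padM_adj M1 N1 m n (X : 'M[C]_(m, n)) : adj (padM M1 N1 X) = padM N1 M1 (adj X).
Proof.
apply/matrixP => i j; rewrite !mxE.
case: (insub (val i) : option 'I_n) => [i'|]; case: (insub (val j) : option 'I_m) => [j'|];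
by rewrite ?mxE ?conjc0.
Qed.

Lemma padM_mul M1 L K1 m n k (X : 'M[C]_(m, n)) (Y : 'M[C]_(n, k)) : (n <= L)%N ->
  padM M1 L X *m padM L K1 Y = padM M1 K1 (X *m Y).
Proof.
move=> hn; apply/matrixP => i j; rewrite !mxE.
under eq_bigr => l _ do rewrite !mxE.
case: (insub (val i) : option 'I_m) => [i'|] /=; last by apply: big1 => l _; rewrite mul0r.
case: (insub (val j) : option 'I_k) => [j'|] /=; last first.
  by apply: big1 => l _; case: (insub (val l) : option 'I_n) => [?|] /=; rewrite ?mulr0 ?mul0r.
rewrite mxE.
pose G l := match (insub l : option 'I_n) with Some l' => X i' l' * Y l' j' | None => 0 end.
transitivity (\sum_(l < L) G l).
  by apply: eq_bigr => l _; rewrite /G; case: (insub (val l) : option 'I_n) => [?|] /=; rewrite ?mul0r.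
rewrite -(sum_widen (F := G) hn); last by move=> l h1 h2; rewrite /G insubF // ltnNge h1.
by apply: eq_bigr => l _; rewrite /G valK.
Qed.

Lemma padMD M1 N1 m n (X Y : 'M[C]_(m, n)) : padM M1 N1 (X + Y) = padM M1 N1 X + padM M1 N1 Y.
Proof.
apply/matrixP => i j; rewrite !mxE.
by case: (insub (val i) : option 'I_m) => [i'|]; case: (insub (val j) : option 'I_n) => [j'|];
  rewrite ?mxE ?addr0.
Qed.

Lemma tr_padM N a (X : 'M[C]_a) : (a <= N)%N -> \tr (padM N N X) = \tr X.
Proof.
move=> ha; rewrite /mxtrace.
pose G l := match (insub l : option 'I_a) with Some l' => X l' l' | None => 0 end.
transitivity (\sum_(l < N) G l).
  by apply: eq_bigr => l _; rewrite !mxE /G; case: (insub (val l) : option 'I_a).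
rewrite -(sum_widen (F := G) ha); last by move=> l h1 h2; rewrite /G insubF // ltnNge h1.
by apply: eq_bigr => l _; rewrite /G valK.
Qed.

Lemma padM_block N N' K K' m n (X : 'M[C]_(m, n)) : (m <= N)%N -> (n <= K)%N ->
  padM (N + N') (K + K') X = block_mx (padM N K X) 0 0 0.
Proof.
move=> hm hn; apply/matrixP => i j.
case: (split_ordP i) => i' ->; case: (split_ordP j) => j' ->;
rewrite ?block_mxEul ?block_mxEur ?block_mxEdl ?block_mxEdr !mxE //=.
- by case: (insub (val i') : option 'I_m) => [?|] //; rewrite insubF //; apply/negbTE; rewrite -leqNgt; lia.
- by rewrite insubF //; apply/negbTE; rewrite -leqNgt; lia.
- by rewrite insubF //; apply/negbTE; rewrite -leqNgt; lia.
Qed.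

End Pad.

Section Final.
Variable R : realType.
Variable theta : R.
Local Notation A := (Atheta R).
Local Notation C := (R[i]).

Definition E m n (M : 'M[C]_(m, n)) : 'M[A]_(m, n) := map_mx (@emb R) M.
Definition sqE k (M : 'M[C]_k) : sqmx R := existT (fun m => 'M[A]_m) k (E M).
Definition hp m (X : 'M[C]_m) := X *m X = X /\ adj X = X.

Lemma E_mul m n p (X : 'M[C]_(m, n)) (Y : 'M[C]_(n, p)) :
  mmul theta (E X) (E Y) = E (X *m Y).
Proof.
apply/matrixP => i j; rewrite !mxE emb_sum; apply: eq_bigr => l _.
by rewrite !mxE wmul_emb.
Qed.

Lemma E_star m n (X : 'M[C]_(m, n)) : mstar theta (E X) = E (adj X).
Proof. by apply/matrixP => i j; rewrite !mxE wstar_emb. Qed.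

Lemma mid_E n : mid R n = E 1%:M.
Proof.
apply/matrixP => i j; rewrite !mxE; case: eqP => _ /=.
  by rewrite emb1.
by rewrite emb0.
Qed.

Lemma E_inj m n (X Y : 'M[C]_(m, n)) : E X = E Y -> X = Y.
Proof. by move/matrixP => h; apply/matrixP => i j; have := h i j; rewrite !mxE => /emb_inj. Qed.

Lemma E0 m n : E (0 : 'M[C]_(m, n)) = 0.
Proof. by apply/matrixP => i j; rewrite !mxE emb0. Qed.

Lemma E_block m1 m2 n1 n2 (Aul : 'M[C]_(m1, n1)) (Aur : 'M[C]_(m1, n2))
  (Adl : 'M[C]_(m2, n1)) (Adr : 'M[C]_(m2, n2)) :
  E (block_mx Aul Aur Adl Adr) = block_mx (E Aul) (E Aur) (E Adl) (E Adr).
Proof. exact: map_block_mx. Qed.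

Lemma pad_E N a (X : 'M[C]_a) : pad N (E X) = E (padM N N X).
Proof.
apply/matrixP => i j; rewrite !mxE.
case: (insub (val i) : option 'I_a) => [i'|]; case: (insub (val j) : option 'I_a) => [j'|];
by rewrite /= ?mxE ?emb0.
Qed.

Lemma E_const m (M : 'M[A]_m) : (forall i j, M i j = emb (acoef (M i j) 0 0)) ->
  M = E (\matrix_(i, j) acoef (M i j) 0 0).
Proof. by move=> h; apply/matrixP => i j; rewrite !mxE -h. Qed.

Lemma proj_E m (M : 'M[A]_m) : is_proj theta (existT _ m M) -> exists X, M = E X /\ hp X.
Proof.
move=> hP; rewrite /is_proj /= in hP; have := proj_const hP; move/E_const.
set X := \matrix_(i, j) acoef (M i j) 0 0 => hM.
exists X; split => //.
case: hP => h1 h2; rewrite hM E_mul in h1; rewrite hM E_star in h2.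
by split; apply: E_inj.
Qed.

Lemma hp_block a b (X : 'M[C]_a) (Y : 'M[C]_b) : hp X -> hp Y -> hp (block_mx X 0 0 Y).
Proof.
move=> [h1 h2] [h3 h4]; split.
  by rewrite mulmx_block !mulmx0 !mul0mx !addr0 add0r h1 h3.
by rewrite adj_block !adj0 h2 h4.
Qed.

Lemma hp_1 n : hp (1%:M : 'M[C]_n).
Proof. by split; rewrite ?mulmx1 ?adj1. Qed.

Lemma is_proj_E k (X : 'M[C]_k) : hp X -> is_proj theta (sqE X).
Proof. by move=> [h1 h2]; split; rewrite /= ?E_mul ?E_star ?h1 ?h2. Qed.

Lemma dsumE a b (X : 'M[C]_a) (Y : 'M[C]_b) :
  dsum (sqE X) (sqE Y) = sqE (block_mx X 0 0 Y).
Proof. by rewrite /dsum /sqE /= E_block !E0. Qed.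

Lemma idemC n (P : 'M[C]_n) : P *m P = P -> (1%:M - P) *m (1%:M - P) = 1%:M - P.
Proof. by move=> h; rewrite mulmxBl !mul1mx mulmxBr mulmx1 h subrr subr0. Qed.

Lemma equiv_E a b (X : 'M[C]_a) (Y : 'M[C]_b) : hp X -> hp Y -> \tr X = \tr Y ->
  proj_equiv theta (sqE X) (sqE Y).
Proof.
move=> [hXX hXs] [hYY hYs] htr.
have [r [VX [hX1 hX2]]] := GS hXX hXs.
have [s [VY [hY1 hY2]]] := GS hYY hYs.
have rs : r = s.
  apply/eqP; rewrite -(@eqr_nat C) -(tr_GS hX1 hX2) -(tr_GS hY1 hY2) htr //.
subst s.
set N := (a + b)%N.
have ha : (a <= N)%N by rewrite /N; lia.
have hb : (b <= N)%N by rewrite /N; lia.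
set X' := padM N N X; set Y' := padM N N Y.
set VXp := padM N r VX; set VYp := padM N r VY.
have hWX1 : adj VXp *m VXp = 1%:M by rewrite /VXp padM_adj padM_mul // hX1 padM_id.
have hWX2 : VXp *m adj VXp = X' by rewrite /VXp padM_adj padM_mul // hX2.
have hWY1 : adj VYp *m VYp = 1%:M by rewrite /VYp padM_adj padM_mul // hY1 padM_id.
have hWY2 : VYp *m adj VYp = Y' by rewrite /VYp padM_adj padM_mul // hY2.
have hX'X' : X' *m X' = X' by rewrite /X' padM_mul // hXX.
have hY'Y' : Y' *m Y' = Y' by rewrite /Y' padM_mul // hYY.
have hX's : adj X' = X' by rewrite /X' padM_adj hXs.
have hY's : adj Y' = Y' by rewrite /Y' padM_adj hYs.
set W := VXp *m adj VYp.
have WWs : W *m adj W = X'.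
  by rewrite /W adjM adjK !mulmxA -(mulmxA VXp (adj VYp) VYp) hWY1 mulmx1 hWX2.
have WsW : adj W *m W = Y'.
  by rewrite /W adjM adjK !mulmxA -(mulmxA VYp (adj VXp) VXp) hWX1 mulmx1 hWY2.
have XW : X' *m W = W.
  by rewrite -hWX2 /W !mulmxA -(mulmxA VXp (adj VXp) VXp) hWX1 mulmx1.
have hWYe : W *m Y' = W.
  by rewrite -hWY2 /W !mulmxA -(mulmxA VXp (adj VYp) VYp) hWY1 mulmx1.
have WsX : adj W *m X' = adj W by rewrite -hX's -adjM XW.
have YWs : Y' *m adj W = adj W by rewrite -hY's -adjM hWYe.
set U := block_mx W (1%:M - X') (1%:M - Y') (adj W).
have hUs : adj U = block_mx (adj W) (1%:M - Y') (1%:M - X') W.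
  by rewrite /U adj_block !adjB !adj1 hX's hY's adjK.
have hU1 : U *m adj U = 1%:M.
  rewrite hUs mulmx_block [RHS](scalar_mx_block N N 1); congr block_mx.
  - by rewrite WWs idemC // addrC subrK.
  - by rewrite mulmxBr mulmx1 hWYe subrr mulmxBl mul1mx XW subrr addr0.
  - by rewrite mulmxBl mul1mx YWs subrr mulmxBr mulmx1 WsX subrr addr0.
  - by rewrite idemC // WsW subrK.
have hU2 : adj U *m U = 1%:M.
  rewrite hUs mulmx_block [RHS](scalar_mx_block N N 1); congr block_mx.
  - by rewrite WsW idemC // addrC subrK.
  - by rewrite mulmxBr mulmx1 WsX subrr mulmxBl mul1mx YWs subrr addr0.
  - by rewrite mulmxBl mul1mx XW subrr mulmxBr mulmx1 hWYe subrr addr0.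
  - by rewrite idemC // WWs subrK.
have hconj : padM (N + N) (N + N) X = U *m padM (N + N) (N + N) Y *m adj U.
  rewrite (padM_block (N := N) (K := N) N N X ha ha).
  rewrite (padM_block (N := N) (K := N) N N Y hb hb) -/X' -/Y'.
  have h1 : U *m block_mx Y' 0 0 0 = block_mx W 0 0 0 :> 'M_(N + N).
    by rewrite /U mulmx_block !mulmx0 !addr0 hWYe mulmxBl mul1mx hY'Y' subrr.
  rewrite h1 hUs mulmx_block !mul0mx !addr0 WWs mulmxBr mulmx1 hWYe subrr.
  by congr block_mx.
exists (N + N)%N, (E U); split; first exact: leq_trans ha (leq_addr _ _).
split; first exact: leq_trans hb (leq_addr _ _).
split. split. rewrite E_star E_mul hU1 mid_E; reflexivity.
rewrite E_star E_mul hU2 mid_E; reflexivity.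
change (pad (N + N) (E X) = mmul theta (mmul theta (E U) (pad (N + N) (E Y))) (mstar theta (E U))).
rewrite !pad_E E_star !E_mul hconj; reflexivity.
Qed.

Lemma equiv_tr a b (X : 'M[C]_a) (Y : 'M[C]_b) :
  proj_equiv theta (sqE X) (sqE Y) -> \tr X = \tr Y.
Proof.
move=> [N [U [ha [hb [hU heq]]]]].
have := unitary_const hU; move/E_const => hUE.
set U0 := \matrix_(i, j) acoef (U i j) 0 0 in hUE.
rewrite hUE in hU heq.
case: hU => _ hU2.
rewrite E_star E_mul mid_E in hU2; move/E_inj: hU2 => hU2.
rewrite /= !pad_E E_star !E_mul in heq; move/E_inj: heq => heq.
rewrite -(tr_padM X ha) -(tr_padM Y hb) heq mxtrace_mulC mulmxA hU2 mul1mx; reflexivity.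
Qed.

Definition zp (z : int) : nat := match z with Posz n => n | Negz _ => 0%N end.
Definition zn (z : int) : nat := match z with Posz _ => 0%N | Negz n => n.+1 end.
Definition sqI k := sqE (1%:M : 'M[C]_k).

Lemma zpn z : ((zp z)%:Z - (zn z)%:Z = z)%R.
Proof. by case: z => n /=; rewrite ?subr0 // NegzE add0r. Qed.

Lemma int_classE z : int_class R z = (sqI (zp z), sqI (zn z)).
Proof.
have e0 : sq_empty R = sqI 0.
  rewrite /sq_empty /sqI /sqE; congr existT; apply/matrixP => -[m hm].
  exfalso; have := hm; rewrite ltn0; discriminate.
have e1 : forall n, sq_id R n = sqI n.
  move=> n; rewrite /sq_id /sqI /sqE mid_E; reflexivity.
case: z => n; rewrite /int_class ?e0 ?e1; reflexivity.
Qed.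

Lemma natC_inj (m n : nat) : (m%:R : C) = n%:R -> m = n.
Proof. by move/eqP; rewrite eqr_nat => /eqP. Qed.

Lemma main_thm :
  (forall P Q : sqmx R, is_proj theta P -> is_proj theta Q ->
     exists n : int, K0_eq theta (P, Q) (int_class R n)) /\
  (forall n m : int, K0_eq theta (int_class R n) (int_class R m) -> n = m).
Proof.
split.
  move=> [m PM] [m' QM] hP hQ.
  have [X [eX hX]] := proj_E hP; have [Y [eY hY]] := proj_E hQ.
  subst PM QM.
  have [r [VX [h1 h2]]] := GS hX.1 hX.2.
  have [s [VY [h3 h4]]] := GS hY.1 hY.2.
  exists (r%:Z - s%:Z)%R; rewrite /K0_eq int_classE.
  exists (sqI 0); split; first by apply: is_proj_E; exact: hp_1.
  rewrite -/(sqE X) -/(sqE Y) /sqI !dsumE.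
  apply: equiv_E.
  - apply: hp_block; [apply: hp_block; [exact: hX | exact: hp_1] | exact: hp_1].
  - apply: hp_block; [apply: hp_block; [exact: hp_1 | exact: hY] | exact: hp_1].
  rewrite !mxtrace_block !mxtrace1 (tr_GS h1 h2) (tr_GS h3 h4) -!natrD.
  congr (_%:R); have := zpn (r%:Z - s%:Z)%R; lia.
move=> n m; rewrite /K0_eq !int_classE => -[[k RM] [hR heq]].
have [X [eX hX]] := proj_E hR; subst RM.
move: heq; rewrite -/(sqE X) /sqI !dsumE => /equiv_tr.
rewrite !mxtrace_block !mxtrace1 => /addIr; rewrite -!natrD => /natC_inj.
have := zpn n; have := zpn m; lia.
Qed.

End Final.

End Aux.

Theorem corollary2p4 (R : realType) (theta : R) (htheta : 0 <= theta) :
  (forall P Q : sqmx R, is_proj theta P -> is_proj theta Q ->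
     exists n : int, K0_eq theta (P, Q) (int_class R n)) /\
  (forall n m : int, K0_eq theta (int_class R n) (int_class R m) -> n = m).
Proof. exact: (@Aux.main_thm R theta). Qed.
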